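(* Let $r\ge1$ be an integer and $g\in C^\infty[a,b]$ with $g(a)=0$, $g^{(j)}(a)=0$ for $j=1,\dots,r$, and $g^{(r+1)}(x)\ne0$ for all $x\in[a,b]$. For integers $k\ge0$ define $\widehat\varphi_k(x)=g'(x)g(x)^{\frac{k-r}{r+1}}$ if $g^{(r+1)}>0$ on $[a,b]$, and $\widehat\varphi_k(x)=g'(x)(-g(x))^{\frac{k-r}{r+1}}$ if $g^{(r+1)}<0$ on $[a,b]$ (with values at $x=a$ by continuous extension). For $n\ge1$, the space $\widehat{\mathcal{E}}=\{v=\sum_{k=0}^{n-1}c_k\widehat\varphi_k:c_k\in\mathbb{R}\}$ is an extended Chebyshev space on $[a,b]$.
   Context: An extended Chebyshev space on $[a,b]$ is an $n$-dimensional linear space of sufficiently smooth functions on $[a,b]$ in which every nonzero element has at most $n-1$ zeros in $[a,b]$ counted with multiplicity (equivalently, every Hermite interpolation problem with $n$ conditions at points of $[a,b]$ has a unique solution in the space). Real powers of positive numbers are the positive real ones. *)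

(* Defs.v *)
From Stdlib Require Import Reals List.
From Coquelicot Require Import Coquelicot.
Open Scope R_scope.

Definition has_deriv_on (a b : R) (f f' : R -> R) : Prop :=
  forall x, a <= x <= b ->
    filterlim (fun y => (f y - f x) / (y - x))
      (within (fun y => a <= y <= b /\ y <> x) (locally x))
      (locally (f' x)).

(* D is a full sequence of successive derivatives on [a,b]
   (D 0 is the function itself, D (j+1) = (D j)' on [a,b]);
   existence of such D for f means f is C^infinity on [a,b]. *)
Definition deriv_seq_on (a b : R) (D : nat -> R -> R) : Prop :=
  forall j, has_deriv_on a b (D j) (D (S j)).

Fixpoint lsum (n : nat) (F : nat -> R) : R :=
  match n with
  | O => 0
  | S m => lsum m F + F m
  end.

(* Main.v *)
Require Import Defs.
From Stdlib Require Import Reals List Lra Lia Psatz ClassicalEpsilon.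
From Coquelicot Require Import Coquelicot.
From mathcomp Require ssreflect ssrfun ssrbool eqtype ssrnat seq fintype bigop ssralg poly polydiv.
From mathcomp.reals_stdlib Require Rstruct.
Open Scope R_scope.

Definition LimW (a b x : R) (F : R -> R) (L : R) := forall eps, 0 < eps ->
  exists d, 0 < d /\ forall y, a <= y <= b -> y <> x -> Rabs (y - x) < d -> Rabs (F y - L) < eps.

Definition Dw (a b : R) (f f' : R -> R) := forall x, a <= x <= b ->
  LimW a b x (fun y => (f y - f x)/(y - x)) (f' x).

Lemma hdo_Dw a b f f' : has_deriv_on a b f f' <-> Dw a b f f'.
Proof.
split.
- intros H x Hx eps Heps.
  specialize (H x Hx). apply filterlim_locally with (eps := mkposreal eps Heps) in H.
  destruct H as [d Hd]. exists d; split; [apply cond_pos|].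
  intros y Hy Hyx Hd'. apply (Hd y); [exact Hd'| split; auto].
- intros H x Hx. apply filterlim_locally. intros eps.
  destruct (H x Hx eps (cond_pos eps)) as [d [Hd Hd']].
  exists (mkposreal d Hd). intros y Hy [Hy1 Hy2]. apply Hd'; auto.
Qed.

Section Lims.
Variables a b x : R.

Lemma LW_const c : LimW a b x (fun _ => c) c.
Proof. intros e He; exists 1; split; [lra|]; intros; rewrite Rminus_eq_0, Rabs_R0; lra. Qed.

Lemma LW_id : LimW a b x (fun y => y) x.
Proof. intros e He; exists e; split; [lra|]; intros; auto. Qed.

Lemma LW_ext F G L : (forall y, a <= y <= b -> y <> x -> F y = G y) -> LimW a b x F L -> LimW a b x G L.
Proof.
intros HFG H e He; destruct (H e He) as [d [Hd H']]; exists d; split; auto.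
intros y Hy Hyx Hd'; rewrite <- HFG; auto.
Qed.

Lemma LW_plus F G L M : LimW a b x F L -> LimW a b x G M -> LimW a b x (fun y => F y + G y) (L + M).
Proof.
intros HF HG e He.
destruct (HF (e/2)) as [d1 [Hd1 H1]]; [lra|].
destruct (HG (e/2)) as [d2 [Hd2 H2]]; [lra|].
exists (Rmin d1 d2); split; [apply Rmin_pos; auto|].
intros y Hy Hyx Hd.
assert (A1 := H1 y Hy Hyx (Rlt_le_trans _ _ _ Hd (Rmin_l _ _))).
assert (A2 := H2 y Hy Hyx (Rlt_le_trans _ _ _ Hd (Rmin_r _ _))).
replace (F y + G y - (L + M)) with ((F y - L) + (G y - M)) by ring.
eapply Rle_lt_trans; [apply Rabs_triang|]. lra.
Qed.

Lemma LW_mult F G L M : LimW a b x F L -> LimW a b x G M -> LimW a b x (fun y => F y * G y) (L * M).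
Proof.
intros HF HG e He.
assert (HM : 0 < Rabs M + 1) by (pose proof (Rabs_pos M); lra).
assert (HL : 0 < Rabs L + 1) by (pose proof (Rabs_pos L); lra).
destruct (HF (e/2/(Rabs M + 1))) as [d1 [Hd1 H1]]; [apply Rdiv_lt_0_compat; lra|].
destruct (HG (Rmin 1 (e/2/(Rabs L + 1)))) as [d2 [Hd2 H2]].
{ apply Rmin_pos; [lra| apply Rdiv_lt_0_compat; lra]. }
exists (Rmin d1 d2); split; [apply Rmin_pos; auto|].
intros y Hy Hyx Hd.
assert (A1 := H1 y Hy Hyx (Rlt_le_trans _ _ _ Hd (Rmin_l _ _))).
assert (A2 := H2 y Hy Hyx (Rlt_le_trans _ _ _ Hd (Rmin_r _ _))).
assert (B1 : Rabs (G y - M) < 1) by (eapply Rlt_le_trans; [apply A2| apply Rmin_l]).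
assert (B2 : Rabs (G y - M) < e/2/(Rabs L + 1)) by (eapply Rlt_le_trans; [apply A2| apply Rmin_r]).
assert (BG : Rabs (G y) <= Rabs M + 1).
{ replace (G y) with ((G y - M) + M) by ring.
  eapply Rle_trans; [apply Rabs_triang|]. lra. }
replace (F y * G y - L * M) with ((F y - L) * G y + L * (G y - M)) by ring.
eapply Rle_lt_trans; [apply Rabs_triang|]. rewrite !Rabs_mult.
assert (C1 : Rabs (F y - L) * Rabs (G y) <= e/2).
{ apply Rle_trans with (Rabs (F y - L) * (Rabs M + 1)).
  apply Rmult_le_compat_l; [apply Rabs_pos| auto].
  apply Rlt_le in A1. apply (Rmult_le_compat_r (Rabs M + 1)) in A1; [|lra].
  unfold Rdiv in A1 at 1. rewrite Rmult_assoc, Rinv_l, Rmult_1_r in A1; lra. }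
assert (C2 : Rabs L * Rabs (G y - M) < e/2).
{ apply Rle_lt_trans with ((Rabs L + 1) * Rabs (G y - M)).
  apply Rmult_le_compat_r; [apply Rabs_pos| lra].
  apply (Rmult_lt_compat_l (Rabs L + 1)) in B2; [|lra].
  replace ((Rabs L + 1) * (e / 2 / (Rabs L + 1))) with (e/2) in B2 by (field; lra). lra. }
lra.
Qed.

Lemma LW_scal c F L : LimW a b x F L -> LimW a b x (fun y => c * F y) (c * L).
Proof. intros; apply LW_mult; auto; apply LW_const. Qed.

Lemma LW_opp F L : LimW a b x F L -> LimW a b x (fun y => - F y) (- L).
Proof. intros H; replace (-L) with (-1*L) by ring.
  eapply LW_ext; [| apply (LW_scal (-1) _ _ H)]. intros; simpl; ring. Qed.

Lemma LW_minus F G L M : LimW a b x F L -> LimW a b x G M -> LimW a b x (fun y => F y - G y) (L - M).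
Proof. intros; apply LW_plus; auto; apply LW_opp; auto. Qed.

Lemma LW_eq F L L' : L = L' -> LimW a b x F L -> LimW a b x F L'.
Proof. intros ->; auto. Qed.

Lemma LW_unique F L L' : a < b -> a <= x <= b -> LimW a b x F L -> LimW a b x F L' -> L = L'.
Proof.
intros Hab Hx H1 H2. apply Rminus_diag_uniq. destruct (Req_dec (L - L') 0) as [E|E]; auto.
exfalso. assert (He : 0 < Rabs (L - L') / 2) by (apply Rdiv_lt_0_compat; [apply Rabs_pos_lt; auto| lra]).
destruct (H1 _ He) as [d1 [Hd1 A1]]. destruct (H2 _ He) as [d2 [Hd2 A2]].
set (d := Rmin (Rmin d1 d2) (b - a)).
assert (Hd : 0 < d) by (unfold d; repeat apply Rmin_pos; lra).
assert (Hd' : d <= d1 /\ d <= d2 /\ d <= b - a) by (unfold d; repeat split;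
  [eapply Rle_trans; [apply Rmin_l| apply Rmin_l] | eapply Rle_trans; [apply Rmin_l| apply Rmin_r] | apply Rmin_r]).
destruct (Rle_dec (x + d/2) b) as [Hxb|Hxb].
- assert (Hy : a <= x + d/2 <= b) by lra.
  assert (Hyx : x + d/2 <> x) by lra.
  assert (Hdd : Rabs (x + d/2 - x) < d) by (rewrite Rabs_right; lra).
  specialize (A1 _ Hy Hyx ltac:(lra)). specialize (A2 _ Hy Hyx ltac:(lra)).
  assert (Rabs (L - L') <= Rabs (F (x + d/2) - L') + Rabs (F (x + d/2) - L)).
  { replace (L - L') with ((F (x + d/2) - L') - (F (x + d/2) - L)) by ring.
    eapply Rle_trans; [apply Rabs_triang|]. rewrite Rabs_Ropp; lra. }
  lra.
- assert (Hy : a <= x - d/2 <= b) by lra.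
  assert (Hyx : x - d/2 <> x) by lra.
  assert (Hdd : Rabs (x - d/2 - x) < d) by (rewrite Rabs_left; lra).
  specialize (A1 _ Hy Hyx ltac:(lra)). specialize (A2 _ Hy Hyx ltac:(lra)).
  assert (Rabs (L - L') <= Rabs (F (x - d/2) - L') + Rabs (F (x - d/2) - L)).
  { replace (L - L') with ((F (x - d/2) - L') - (F (x - d/2) - L)) by ring.
    eapply Rle_trans; [apply Rabs_triang|]. rewrite Rabs_Ropp; lra. }
  lra.
Qed.
End Lims.

Section Der.
Variables a b : R.

Lemma Dw_cont f f' x : Dw a b f f' -> a <= x <= b -> LimW a b x f (f x).
Proof.
intros H Hx. specialize (H x Hx).
apply LW_eq with (L := f' x * (x - x) + f x); [ring|].
apply LW_ext with (F := fun y => (f y - f x)/(y - x) * (y - x) + f x).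
- intros y _ Hyx; field; lra.
- apply LW_plus; [apply LW_mult; auto|apply LW_const].
  apply LW_minus; [apply LW_id|apply LW_const].
Qed.

Lemma Dw_ext f f' g g' : (forall y, a <= y <= b -> f y = g y) -> (forall y, a <= y <= b -> f' y = g' y) ->
  Dw a b f f' -> Dw a b g g'.
Proof.
intros E E' H x Hx. rewrite <- E'; auto.
apply LW_ext with (F := fun y => (f y - f x)/(y - x)); [|auto].
intros y Hy _; rewrite !E; auto.
Qed.

Lemma Dw_const c : Dw a b (fun _ => c) (fun _ => 0).
Proof. intros x Hx; apply LW_ext with (F := fun _ => 0); [intros; field; lra| apply LW_const]. Qed.

Lemma Dw_id : Dw a b (fun y => y) (fun _ => 1).
Proof. intros x Hx; apply LW_ext with (F := fun _ => 1); [intros; field; lra| apply LW_const]. Qed.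

Lemma Dw_plus f f' g g' : Dw a b f f' -> Dw a b g g' -> Dw a b (fun y => f y + g y) (fun y => f' y + g' y).
Proof.
intros Hf Hg x Hx. apply LW_ext with (F := fun y => (f y - f x)/(y - x) + (g y - g x)/(y - x)).
- intros; field; lra.
- apply LW_plus; auto.
Qed.

Lemma Dw_mult f f' g g' : Dw a b f f' -> Dw a b g g' ->
  Dw a b (fun y => f y * g y) (fun y => f' y * g y + f y * g' y).
Proof.
intros Hf Hg x Hx.
apply LW_eq with (L := g x * f' x + f x * g' x); [ring|].
apply LW_ext with (F := fun y => g x * ((f y - f x)/(y - x)) + f y * ((g y - g x)/(y - x))).
- intros; field; lra.
- apply LW_plus; [apply LW_scal; auto| apply LW_mult; auto].
  apply (Dw_cont f f'); auto.
Qed.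

Lemma Dw_scal c f f' : Dw a b f f' -> Dw a b (fun y => c * f y) (fun y => c * f' y).
Proof.
intros Hf. eapply Dw_ext; [| |apply Dw_mult; [apply (Dw_const c)| apply Hf]]; intros; simpl; ring.
Qed.

Lemma Dw_opp f f' : Dw a b f f' -> Dw a b (fun y => - f y) (fun y => - f' y).
Proof. intros Hf. eapply Dw_ext; [| | apply (Dw_scal (-1) _ _ Hf)]; intros; simpl; ring. Qed.

Lemma Dw_minus f f' g g' : Dw a b f f' -> Dw a b g g' -> Dw a b (fun y => f y - g y) (fun y => f' y - g' y).
Proof. intros; apply Dw_plus; auto; apply Dw_opp; auto. Qed.

Lemma Dw_comp (F F' f f' : R -> R) :
  (forall x, a <= x <= b -> derivable_pt_lim F (f x) (F' (f x))) -> Dw a b f f' ->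
  Dw a b (fun y => F (f y)) (fun y => F' (f y) * f' y).
Proof.
intros HF Hf x Hx.
set (Phi := fun z => match Req_EM_T z (f x) with left _ => F' (f x) | right _ => (F z - F (f x)) / (z - f x) end).
apply LW_ext with (F := fun y => Phi (f y) * ((f y - f x)/(y - x))).
- intros y Hy Hyx. unfold Phi. destruct (Req_EM_T (f y) (f x)) as [E|E].
  + rewrite E. unfold Rdiv. rewrite !Rminus_eq_0. ring.
  + field; split; lra.
- apply LW_mult; [|apply Hf; auto].
  intros e He. destruct (HF x Hx e He) as [d1 Hd1].
  destruct (Dw_cont f f' x Hf Hx d1 (cond_pos d1)) as [d2 [Hd2 H2]].
  exists d2; split; auto. intros y Hy Hyx Hyd.
  unfold Phi. destruct (Req_EM_T (f y) (f x)) as [E|E].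
  + rewrite Rminus_eq_0, Rabs_R0; lra.
  + specialize (Hd1 (f y - f x) ltac:(lra) (H2 y Hy Hyx Hyd)).
    replace (f x + (f y - f x)) with (f y) in Hd1 by ring. exact Hd1.
Qed.

Lemma Dw_pow f f' k : Dw a b f f' -> Dw a b (fun y => f y ^ k) (fun y => INR k * f y ^ pred k * f' y).
Proof.
intros Hf. apply (Dw_comp (fun z => z ^ k) (fun z => INR k * z ^ pred k)); auto.
intros; apply derivable_pt_lim_pow.
Qed.

Lemma Dw_Rpower f f' be : (forall x, a <= x <= b -> 0 < f x) -> Dw a b f f' ->
  Dw a b (fun y => Rpower (f y) be) (fun y => be * Rpower (f y) (be - 1) * f' y).
Proof.
intros Hp Hf. apply (Dw_comp (fun z => Rpower z be) (fun z => be * Rpower z (be - 1))); auto.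
intros; apply derivable_pt_lim_power; auto.
Qed.

Lemma Dw_of_dpl f f' : (forall x, a <= x <= b -> derivable_pt_lim f x (f' x)) -> Dw a b f f'.
Proof.
intros H x Hx e He. destruct (H x Hx e He) as [d Hd]. exists d; split; [apply cond_pos|].
intros y Hy Hyx Hyd. specialize (Hd (y - x) ltac:(lra) Hyd).
replace (x + (y - x)) with y in Hd by ring. exact Hd.
Qed.

Lemma dpl_of_Dw f f' x : Dw a b f f' -> a < x < b -> derivable_pt_lim f x (f' x).
Proof.
intros H Hx e He. destruct (H x ltac:(lra) e He) as [d [Hd H']].
assert (Hd2 : 0 < Rmin d (Rmin (x - a) (b - x))) by (repeat apply Rmin_pos; lra).
exists (mkposreal _ Hd2). intros h Hh Hhd. simpl in Hhd.
assert (Hh1 : Rabs h < d) by (eapply Rlt_le_trans; [apply Hhd| apply Rmin_l]).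
assert (Hh2 : Rabs h < Rmin (x - a) (b - x)) by (eapply Rlt_le_trans; [apply Hhd| apply Rmin_r]).
assert (Hh3 : Rabs h < x - a) by (eapply Rlt_le_trans; [apply Hh2| apply Rmin_l]).
assert (Hh4 : Rabs h < b - x) by (eapply Rlt_le_trans; [apply Hh2| apply Rmin_r]).
apply Rabs_def2 in Hh3. apply Rabs_def2 in Hh4.
specialize (H' (x + h) ltac:(lra) ltac:(lra)).
replace (x + h - x) with h in H' by ring. apply H'; auto.
Qed.

Definition clamp (y : R) := Rmax a (Rmin b y).

Lemma clamp_in y : a <= b -> a <= clamp y <= b.
Proof. intros; unfold clamp, Rmax, Rmin; repeat destruct Rle_dec; lra. Qed.

Lemma clamp_id y : a <= y <= b -> clamp y = y.
Proof. intros; unfold clamp, Rmax, Rmin; repeat destruct Rle_dec; lra. Qed.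

Lemma clamp_lip y z : a <= b -> Rabs (clamp y - clamp z) <= Rabs (y - z).
Proof.
intros; unfold clamp, Rmax, Rmin; repeat destruct Rle_dec;
  unfold Rabs; repeat destruct Rcase_abs; lra.
Qed.

Lemma cont_clamp f y : a <= b -> (forall x, a <= x <= b -> LimW a b x f (f x)) ->
  continuity_pt (fun z => f (clamp z)) y.
Proof.
intros Hab Hf e He. destruct (Hf (clamp y) (clamp_in y Hab) e He) as [d [Hd H]].
exists d; split; auto. intros z [_ Hz]. simpl in *. unfold R_dist in *.
destruct (Req_dec (clamp z) (clamp y)) as [E|E].
- rewrite E, Rminus_eq_0, Rabs_R0; auto.
- apply H; auto. apply clamp_in; auto. eapply Rle_lt_trans; [apply clamp_lip; auto| auto].
Qed.

Lemma MVT_open f f' x y : x < y -> (forall c, x < c < y -> derivable_pt_lim f c (f' c)) ->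
  (forall c, x <= c <= y -> continuity_pt f c) ->
  exists c, x < c < y /\ f y - f x = f' c * (y - x).
Proof.
intros Hxy Hd Hc.
set (pr1 := fun c (P : x < c < y) => exist (fun l => derivable_pt_abs f c l) (f' c) (Hd c P)).
set (pr2 := fun c (P : x < c < y) => derivable_pt_id c).
destruct (MVT f id x y pr1 pr2 Hxy Hc) as [c [P E]].
{ intros; apply derivable_continuous_pt, derivable_pt_id. }
exists c; split; auto. unfold pr1, pr2 in E. rewrite derive_pt_id in E. simpl in E.
unfold id in E. lra.
Qed.

Lemma MVT_Dw f f' x y : Dw a b f f' -> a <= x -> x < y -> y <= b ->
  exists c, x < c < y /\ f y - f x = f' c * (y - x).
Proof.
intros Hf Hx Hxy Hy.
destruct (MVT_open (fun z => f (clamp z)) f' x y Hxy) as [c [Hc E]].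
- intros c Hc. assert (Hc' : a < c < b) by lra.
  assert (D := dpl_of_Dw f f' c Hf Hc').
  intros e He. destruct (D e He) as [d Hd].
  assert (Hd2 : 0 < Rmin d (Rmin (c - a) (b - c))) by (destruct d; simpl; repeat apply Rmin_pos; lra).
  exists (mkposreal _ Hd2). intros h Hh Hhd. simpl in Hhd.
  assert (Hh1 : Rabs h < d) by (eapply Rlt_le_trans; [apply Hhd| apply Rmin_l]).
  assert (Hh2 : Rabs h < Rmin (c - a) (b - c)) by (eapply Rlt_le_trans; [apply Hhd| apply Rmin_r]).
  assert (Hh3 : Rabs h < c - a) by (eapply Rlt_le_trans; [apply Hh2| apply Rmin_l]).
  assert (Hh4 : Rabs h < b - c) by (eapply Rlt_le_trans; [apply Hh2| apply Rmin_r]).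
  apply Rabs_def2 in Hh3. apply Rabs_def2 in Hh4.
  rewrite !clamp_id; try lra. apply Hd; auto.
- intros c _. apply cont_clamp; [lra|]. intros; apply (Dw_cont f f'); auto.
- exists c; split; auto. rewrite !clamp_id in E; lra.
Qed.

End Der.

Section Smooth.
Variables a b : R.

Definition dseq (D : nat -> R -> R) := forall j, Dw a b (D j) (D (S j)).
Definition smooth (f : R -> R) := exists D, (forall x, a <= x <= b -> D 0%nat x = f x) /\ dseq D.

Lemma smooth_coind (P : (R -> R) -> Prop) :
  (forall f, P f -> exists f', Dw a b f f' /\ P f') -> forall f, P f -> smooth f.
Proof.
intros HP f Hf.
set (step := fun s : {f | P f} =>
  let e := constructive_indefinite_description _ (HP (proj1_sig s) (proj2_sig s)) in
  exist P (proj1_sig e) (proj2 (proj2_sig e))).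
exists (fun j => proj1_sig (Nat.iter j step (exist P f Hf))). split.
- intros; reflexivity.
- intros j. simpl. set (s := Nat.iter j step (exist P f Hf)).
  unfold step; simpl.
  destruct (constructive_indefinite_description _ (HP (proj1_sig s) (proj2_sig s))) as [f' [H1 H2]].
  simpl. exact H1.
Qed.

Lemma smooth_shift f : smooth f -> exists f', Dw a b f f' /\ smooth f'.
Proof.
intros [D [H0 HD]]. exists (D 1%nat). split.
- apply Dw_ext with (D 0%nat) (D 1%nat); auto.
- exists (fun j => D (S j)); split; auto. intros j; apply HD.
Qed.

Lemma smooth_ext f g : (forall x, a <= x <= b -> f x = g x) -> smooth f -> smooth g.
Proof. intros E [D [H0 HD]]; exists D; split; auto; intros; rewrite H0, E; auto. Qed.

Lemma smooth_const c : smooth (fun _ => c).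
Proof.
exists (fun j _ => match j with O => c | _ => 0 end); split; auto.
intros [|j]; apply Dw_const.
Qed.

Lemma smooth_id : smooth (fun x => x).
Proof.
exists (fun j x => match j with O => x | 1%nat => 1 | _ => 0 end); split; auto.
intros [|[|j]]; [apply Dw_id| apply Dw_const| apply Dw_const].
Qed.

Fixpoint sumL (l : list ((R -> R) * (R -> R))%type) (x : R) : R :=
  match l with nil => 0 | p :: l' => fst p x * snd p x + sumL l' x end.

Definition okL (l : list ((R -> R) * (R -> R))%type) := List.Forall (fun p => smooth (fst p) /\ smooth (snd p)) l.

Lemma sumL_der l : okL l -> exists l', okL l' /\ Dw a b (sumL l) (sumL l').
Proof.
induction l as [|[f g] l IH]; intros Hl.
- exists nil; split; [constructor|]. simpl. apply Dw_const.
- inversion Hl as [|? ? [Hf Hg] Hl']; subst. destruct (IH Hl') as [l' [Hok HD]].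
  destruct (smooth_shift f Hf) as [f' [Df Sf']].
  destruct (smooth_shift g Hg) as [g' [Dg Sg']].
  exists ((f', g) :: (f, g') :: l'). split.
  + repeat constructor; auto.
  + simpl. eapply Dw_ext; [intros; reflexivity| |apply Dw_plus; [apply Dw_mult; eauto| apply HD]].
    intros; simpl; ring.
Qed.

Lemma smooth_sumL l : okL l -> smooth (sumL l).
Proof.
intros Hl. apply (smooth_coind (fun h => exists l, okL l /\ forall x, a <= x <= b -> h x = sumL l x)).
- intros h [l0 [Hl0 E]]. destruct (sumL_der l0 Hl0) as [l' [Hl' D]].
  exists (sumL l'). split.
  + eapply Dw_ext; [| |apply D]; intros; [symmetry|]; auto.
  + cbv beta; exists l'; split; auto.
- exists l; split; auto.
Qed.

Lemma smooth_mult f g : smooth f -> smooth g -> smooth (fun x => f x * g x).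
Proof.
intros Hf Hg. apply smooth_ext with (sumL ((f, g) :: nil)).
- intros; simpl; ring.
- apply smooth_sumL. repeat constructor; auto.
Qed.

Lemma smooth_plus f g : smooth f -> smooth g -> smooth (fun x => f x + g x).
Proof.
intros Hf Hg. apply smooth_ext with (sumL ((f, fun _ => 1) :: (g, fun _ => 1) :: nil)).
- intros; simpl; ring.
- apply smooth_sumL. repeat constructor; auto; apply smooth_const.
Qed.

Lemma smooth_scal c f : smooth f -> smooth (fun x => c * f x).
Proof. intros; apply smooth_mult; auto; apply smooth_const. Qed.

Lemma smooth_pow f k : smooth f -> smooth (fun x => f x ^ k).
Proof.
intros Hf; induction k as [|k IH].
- apply smooth_ext with (fun _ => 1); [intros; simpl; ring| apply smooth_const].
- simpl. apply smooth_mult; auto.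
Qed.

Fixpoint sumP (h : R -> R) (l : list ((R -> R) * R)%type) (x : R) : R :=
  match l with nil => 0 | p :: l' => fst p x * Rpower (h x) (snd p) + sumP h l' x end.

Lemma sumP_der h l : (forall x, a <= x <= b -> 0 < h x) -> smooth h ->
  List.Forall (fun p => smooth (fst p)) l ->
  exists l', List.Forall (fun p => smooth (fst p)) l' /\ Dw a b (sumP h l) (sumP h l').
Proof.
intros Hpos Hh. destruct (smooth_shift h Hh) as [h' [Dh Sh']].
induction l as [|[s be] l IH]; intros Hl.
- exists nil; split; [constructor|]. simpl. apply Dw_const.
- inversion Hl as [|? ? Hs Hl']; subst. destruct (IH Hl') as [l' [Hok HD]].
  destruct (smooth_shift s Hs) as [s' [Ds Ss']].
  exists ((s', be) :: (fun x => be * s x * h' x, be - 1) :: l'). split.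
  + repeat constructor; auto. simpl. apply smooth_mult; [apply smooth_scal|]; auto.
  + simpl. eapply Dw_ext; [intros; reflexivity| |apply Dw_plus;
      [apply Dw_mult; [apply Ds| apply Dw_Rpower; [apply Hpos| apply Dh]]| apply HD]].
    intros; simpl; ring.
Qed.

Lemma smooth_Rpower h be : (forall x, a <= x <= b -> 0 < h x) -> smooth h ->
  smooth (fun x => Rpower (h x) be).
Proof.
intros Hpos Hh.
apply (smooth_coind (fun f => exists l, List.Forall (fun p => smooth (fst p)) l /\
   forall x, a <= x <= b -> f x = sumP h l x)).
- intros f [l0 [Hl0 E]]. destruct (sumP_der h l0 Hpos Hh Hl0) as [l' [Hl' D]].
  exists (sumP h l'). split.
  + eapply Dw_ext; [| |apply D]; intros; [symmetry|]; auto.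
  + cbv beta; exists l'; split; auto.
- exists ((fun _ => 1, be) :: nil). split.
  + repeat constructor. apply smooth_const.
  + intros; simpl; ring.
Qed.

End Smooth.

Lemma cont_of_clamp a b f : a <= b -> (forall x, a <= x <= b -> LimW a b x f (f x)) ->
  forall y, continuous (fun z => f (clamp a b z)) y.
Proof. intros Hab Hf y. apply continuity_pt_filterlim. apply cont_clamp; auto. Qed.

Lemma cont_integ (Kc : R -> R) (j : nat) (u v : R) : (forall y, continuous Kc y) ->
  forall t, continuous (fun t => t ^ j * Kc (u + t * v)) t.
Proof.
intros HK t.
apply (continuous_mult (fun t => t ^ j) (fun t => Kc (u + t * v))).
- apply (ex_derive_continuous (K := R_AbsRing) (V := R_NormedModule) (fun t : R => t ^ j)). auto_derive. auto.
- apply (continuous_comp (fun t => u + t * v) Kc).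
  + apply (ex_derive_continuous (K := R_AbsRing) (V := R_NormedModule) (fun t : R => u + t * v)). auto_derive. auto.
  + apply HK.
Qed.

Lemma ex_integ Kc j u v : (forall y, continuous Kc y) ->
  ex_RInt (fun t => t ^ j * Kc (u + t * v)) 0 1.
Proof. intros HK; apply (ex_RInt_continuous (V := R_CompleteNormedModule)); intros; apply cont_integ; auto. Qed.

Lemma RInt_pow_const j c : RInt (fun t => t ^ j * c) 0 1 = c / INR (S j).
Proof.
apply (is_RInt_unique (V := R_CompleteNormedModule)).
assert (H : is_RInt (fun t => t ^ j * c) 0 1
   (minus ((fun t => c * t ^ (S j) / INR (S j)) 1) ((fun t => c * t ^ (S j) / INR (S j)) 0))).
{ apply (is_RInt_derive (V := R_CompleteNormedModule) (fun t => c * t ^ (S j) / INR (S j))).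
  - intros x _. auto_derive. auto. change (match j with 0%nat => 1 | S _ => INR j + 1 end) with (INR (S j)). field.
    apply not_0_INR; lia.
  - intros; apply (ex_derive_continuous (K := R_AbsRing) (V := R_NormedModule) (fun t : R => t ^ j * c)); auto_derive; auto. }
replace (c / INR (S j)) with (minus ((fun t => c * t ^ (S j) / INR (S j)) 1) ((fun t => c * t ^ (S j) / INR (S j)) 0)).
exact H.
unfold minus, plus, opp; simpl. rewrite pow1. change (match j with 0%nat => 1 | S _ => INR j + 1 end) with (INR (S j)). field. apply not_0_INR; lia.
Qed.

Lemma UD a b K K' : a < b -> Dw a b K K' -> (forall x, a <= x <= b -> LimW a b x K' (K' x)) ->
  forall eta, 0 < eta -> exists d, 0 < d /\ forall y z, a <= y <= b -> a <= z <= b -> Rabs (y - z) < d ->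
  Rabs (K y - K z - K' z * (y - z)) <= eta * Rabs (y - z).
Proof.
intros Hab HK HK' eta Heta.
assert (UC := Heine (fun z => K' (clamp a b z)) (fun c => a <= c <= b) (compact_P3 a b)
  (fun x _ => cont_clamp a b K' x ltac:(lra) HK')).
destruct (UC (mkposreal eta Heta)) as [d Hd]. exists d; split; [apply cond_pos|].
intros y z Hy Hz Hyz. simpl in Hd.
destruct (Rtotal_order y z) as [Hlt|[Heq|Hgt]].
- destruct (MVT_Dw a b K K' y z HK ltac:(lra) Hlt ltac:(lra)) as [c [Hc E]].
  assert (Hcz : Rabs (c - z) < d) by (rewrite Rabs_left by lra; rewrite Rabs_left in Hyz by lra; lra).
  specialize (Hd c z ltac:(lra) Hz Hcz). rewrite !clamp_id in Hd by lra.
  replace (K y - K z) with (- (K' c * (z - y))) by lra.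
  replace (- (K' c * (z - y)) - K' z * (y - z)) with ((K' c - K' z) * (y - z)) by ring.
  rewrite Rabs_mult. apply Rmult_le_compat_r; [apply Rabs_pos| lra].
- subst. rewrite !Rminus_eq_0, Rmult_0_r, Rminus_0_r, Rabs_R0; lra.
- destruct (MVT_Dw a b K K' z y HK ltac:(lra) Hgt ltac:(lra)) as [c [Hc E]].
  assert (Hcz : Rabs (c - z) < d) by (rewrite Rabs_right by lra; rewrite Rabs_right in Hyz by lra; lra).
  specialize (Hd c z ltac:(lra) Hz Hcz). rewrite !clamp_id in Hd by lra.
  rewrite E.
  replace (K' c * (y - z) - K' z * (y - z)) with ((K' c - K' z) * (y - z)) by ring.
  rewrite Rabs_mult. apply Rmult_le_compat_r; [apply Rabs_pos| lra].
Qed.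

Definition Qh a b (DF : nat -> R -> R) (j : nat) (x : R) :=
  RInt (fun t => t ^ j * DF (S j) (clamp a b (a + t * (x - a)))) 0 1.

Lemma dseq_cont a b DF : dseq a b DF -> forall j x, a <= x <= b -> LimW a b x (DF j) (DF j x).
Proof. intros HD j x Hx. apply (Dw_cont a b (DF j) (DF (S j))); auto. Qed.

Lemma Qh_der a b DF : a < b -> dseq a b DF -> forall j, Dw a b (Qh a b DF j) (Qh a b DF (S j)).
Proof.
intros Hab HD j x0 Hx0 eps Heps.
set (K := DF (S j)). set (K' := DF (S (S j))).
assert (HKc : forall y, continuous (fun z => K (clamp a b z)) y).
{ apply cont_of_clamp; [lra|]. apply dseq_cont; auto. }
assert (HK'c : forall y, continuous (fun z => K' (clamp a b z)) y).
{ apply cont_of_clamp; [lra|]. apply dseq_cont; auto. }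
destruct (UD a b K K' Hab (HD (S j)) (dseq_cont a b DF HD (S (S j))) (eps/2) ltac:(lra)) as [d [Hd HU]].
exists d; split; auto. intros y Hy Hyx Hyd.
set (A := fun t => t ^ j * K (clamp a b (a + t * (y - a)))).
set (B := fun t => t ^ j * K (clamp a b (a + t * (x0 - a)))).
set (C := fun t => t ^ (S j) * K' (clamp a b (a + t * (x0 - a)))).
assert (eA : ex_RInt A 0 1) by (apply (ex_integ (fun z => K (clamp a b z))); auto).
assert (eB : ex_RInt B 0 1) by (apply (ex_integ (fun z => K (clamp a b z))); auto).
assert (eC : ex_RInt C 0 1) by (apply (ex_integ (fun z => K' (clamp a b z))); auto).
assert (E : (Qh a b DF j y - Qh a b DF j x0) / (y - x0) - Qh a b DF (S j) x0 =
   RInt (fun t => minus (scal (/ (y - x0)) (minus (A t) (B t))) (C t)) 0 1).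
{ rewrite (RInt_minus (V := R_CompleteNormedModule)).
  - rewrite (RInt_scal (V := R_CompleteNormedModule)).
    + rewrite (RInt_minus (V := R_CompleteNormedModule)); auto.
      change (Qh a b DF j y) with (RInt A 0 1). change (Qh a b DF j x0) with (RInt B 0 1).
      change (Qh a b DF (S j) x0) with (RInt C 0 1).
      generalize (RInt A 0 1) (RInt B 0 1) (RInt C 0 1). intros rA rB rC.
      unfold minus, plus, opp, scal; simpl. unfold mult; simpl. field. lra.
    + apply (ex_RInt_minus (V := R_CompleteNormedModule)); auto.
  - apply (ex_RInt_scal (V := R_CompleteNormedModule)).
    apply (ex_RInt_minus (V := R_CompleteNormedModule)); auto.
  - auto. }
rewrite E.
eapply Rle_lt_trans; [apply (abs_RInt_le_const _ 0 1 (eps/2))|].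
- lra.
- apply (ex_RInt_minus (V := R_CompleteNormedModule)); auto.
  apply (ex_RInt_scal (V := R_CompleteNormedModule)).
  apply (ex_RInt_minus (V := R_CompleteNormedModule)); auto.
- intros t Ht. unfold A, B, C, minus, plus, opp, scal; simpl. unfold mult; simpl.
  rewrite !clamp_id by nra.
  set (Y := a + t * (y - a)). set (Z := a + t * (x0 - a)).
  assert (HYZ : Y - Z = t * (y - x0)) by (unfold Y, Z; ring).
  assert (HU' := HU Y Z ltac:(unfold Y; nra) ltac:(unfold Z; nra)).
  replace (/ (y - x0) * (t ^ j * K Y + - (t ^ j * K Z)) + - (t * t ^ j * K' Z))
    with (t ^ j * (K Y - K Z - K' Z * (Y - Z)) / (y - x0)) by (rewrite HYZ; simpl; field; lra).
  destruct (Req_dec t 0) as [T0|T0].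
  + subst t. unfold Y, Z. replace (a + 0 * (y - a)) with a by ring. replace (a + 0 * (x0 - a)) with a by ring.
    replace (K a - K a - K' a * (a - a)) with 0 by ring. unfold Rdiv. rewrite Rmult_0_r, Rmult_0_l, Rabs_R0. lra.
  + assert (HYZd : Rabs (Y - Z) < d).
    { rewrite HYZ, Rabs_mult. rewrite (Rabs_right t) by lra.
      apply Rle_lt_trans with (1 * Rabs (y - x0)); [apply Rmult_le_compat_r; [apply Rabs_pos|lra]| lra]. }
    specialize (HU' HYZd).
    unfold Rdiv. rewrite !Rabs_mult. rewrite HYZ in HU'. rewrite Rabs_mult in HU'.
    rewrite (Rabs_right t) in HU' by lra.
    assert (Hp : 0 <= Rabs (t ^ j) <= 1).
    { split; [apply Rabs_pos|]. rewrite <- RPow_abs. rewrite Rabs_right by lra. rewrite <- (pow1 j); apply pow_incr; lra. }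
    assert (Hyx0 : 0 < Rabs (y - x0)) by (apply Rabs_pos_lt; lra).
    rewrite Rabs_inv.
    assert (Hm : Rabs (K Y - K Z - K' Z * (Y - Z)) * / Rabs (y - x0) <= eps / 2 * t).
    { rewrite HYZ. apply (Rmult_le_reg_r (Rabs (y - x0))); [exact Hyx0|].
      rewrite Rmult_assoc, Rinv_l, Rmult_1_r by lra. rewrite Rmult_assoc; exact HU'. }
    assert (H0 : 0 <= Rabs (K Y - K Z - K' Z * (Y - Z)) * / Rabs (y - x0)).
    { apply Rmult_le_pos; [apply Rabs_pos| apply Rlt_le, Rinv_0_lt_compat; auto]. }
    rewrite Rmult_assoc.
    apply Rle_trans with (1 * (eps / 2 * t)).
    * apply Rmult_le_compat; lra.
    * nra.
- lra.
Qed.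

Lemma Qh_at_a a b DF j : a <= b -> Qh a b DF j a = DF (S j) a / INR (S j).
Proof.
intros Hab. unfold Qh. rewrite <- RInt_pow_const.
apply RInt_ext. intros t _. rewrite clamp_id by lra. f_equal. f_equal. ring.
Qed.

Lemma Qh_repr a b DF : a < b -> dseq a b DF -> DF 0%nat a = 0 ->
  forall x, a <= x <= b -> DF 0%nat x = (x - a) * Qh a b DF 0 x.
Proof.
intros Hab HD H0 x Hx.
set (f := fun s => DF 1%nat (clamp a b s)).
assert (Hfc : forall y, continuous f y).
{ apply cont_of_clamp; [lra|]. apply dseq_cont; auto. }
assert (Hex : forall u v, ex_RInt f u v).
{ intros; apply (ex_RInt_continuous (V := R_CompleteNormedModule)); intros; apply Hfc. }
set (La := fun y => RInt f a y).
assert (HL : Dw a b La (DF 1%nat)).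
{ apply Dw_ext with La (fun y => f y); [intros; auto| intros; unfold f; rewrite clamp_id; auto|].
  apply Dw_of_dpl. intros y _. apply is_derive_Reals.
  apply (is_derive_RInt (V := R_CompleteNormedModule) f La a y); [|apply Hfc].
  apply filter_forall. intros; apply (RInt_correct (V := R_CompleteNormedModule)); auto. }
assert (HZ : Dw a b (fun y => DF 0%nat y - La y) (fun y => DF 1%nat y - DF 1%nat y)).
{ apply Dw_minus; auto. }
assert (E1 : DF 0%nat x = La x).
{ destruct (Req_dec x a) as [Ea|Ea].
  - subst x. rewrite H0. unfold La. rewrite RInt_point. reflexivity.
  - destruct (MVT_Dw a b _ _ a x HZ ltac:(lra) ltac:(lra) ltac:(lra)) as [c [_ Ec]].
    unfold La in Ec at 2. rewrite RInt_point, H0 in Ec. unfold zero in Ec; simpl in Ec. lra. }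
rewrite E1. unfold La, Qh.
transitivity (RInt (fun t => scal (x - a) (f ((x - a) * t + a))) 0 1).
- rewrite (RInt_comp_lin (V := R_CompleteNormedModule)).
  + f_equal; ring.
  + apply Hex.
- rewrite (RInt_scal (V := R_CompleteNormedModule)).
  + unfold scal; simpl; unfold mult; simpl. f_equal. apply RInt_ext. intros t _.
    unfold f. simpl. rewrite Rmult_1_l. f_equal. f_equal. ring.
  + apply (ex_RInt_ext (V := R_CompleteNormedModule) (fun t => t ^ 0 * f (a + t * (x - a)))).
    * intros t _. unfold f; simpl. rewrite Rmult_1_l. f_equal. f_equal. ring.
    * apply (ex_integ f); auto.
Qed.

Lemma hadamard a b DF : a < b -> dseq a b DF -> DF 0%nat a = 0 ->
  exists DQ, dseq a b DQ /\ (forall x, a <= x <= b -> DF 0%nat x = (x - a) * DQ 0%nat x) /\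
    (forall j, DQ j a = DF (S j) a / INR (S j)).
Proof.
intros Hab HD H0. exists (Qh a b DF). split; [|split].
- intros j; apply Qh_der; auto.
- apply Qh_repr; auto.
- intros j; apply Qh_at_a; lra.
Qed.

Lemma had_iter a b G r : a < b -> dseq a b G -> (forall j, (j <= r)%nat -> G j a = 0) ->
  forall i, (i <= S r)%nat -> exists DH, dseq a b DH /\
   (forall x, a <= x <= b -> G 0%nat x = (x - a) ^ i * DH 0%nat x) /\
   (forall j, exists c, 0 < c /\ DH j a = c * G (i + j)%nat a).
Proof.
intros Hab HG Ha i. induction i as [|i IH]; intros Hi.
- exists G; split; [|split]; auto.
  + intros; simpl; ring.
  + intros j; exists 1; split; [lra|]. simpl; ring.
- destruct (IH ltac:(lia)) as [DH [HD [E Hc]]].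
  destruct (Hc 0%nat) as [c0 [Hc0 E0]].
  assert (Z : DH 0%nat a = 0) by (rewrite E0, Nat.add_0_r, Ha by lia; ring).
  destruct (hadamard a b DH Hab HD Z) as [DQ [HQ [EQ EQa]]].
  exists DQ; split; [|split]; auto.
  + intros x Hx. rewrite E, EQ by auto. simpl; ring.
  + intros j. destruct (Hc (S j)) as [c [Hc' Ec]]. exists (c / INR (S j)). split.
    * apply Rdiv_lt_0_compat; auto. apply lt_0_INR; lia.
    * rewrite EQa, Ec. replace (i + S j)%nat with (S i + j)%nat by lia. field. apply not_0_INR; lia.
Qed.

Lemma sign_chain a b G r : a < b -> dseq a b G -> (forall j, (j <= r)%nat -> G j a = 0) ->
  (forall y, a <= y <= b -> 0 < G (S r) y) ->
  forall m, (m <= S r)%nat -> forall x, a < x <= b -> 0 < G (S r - m)%nat x.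
Proof.
intros Hab HG Ha Hp m. induction m as [|m IH]; intros Hm x Hx.
- rewrite Nat.sub_0_r. apply Hp; lra.
- set (k := (S r - S m)%nat).
  assert (Hk : S k = (S r - m)%nat) by (unfold k; lia).
  destruct (MVT_Dw a b (G k) (G (S k)) a x (HG k) ltac:(lra) ltac:(lra) ltac:(lra)) as [c [Hc E]].
  rewrite Ha in E by (unfold k; lia).
  assert (0 < G (S k) c) by (rewrite Hk; apply IH; [lia| lra]).
  fold k. nra.
Qed.

Lemma eq_from_lims a b f g L M : a < b -> (forall y, a < y <= b -> f y = g y) ->
  filterlim f (at_right a) (locally L) -> LimW a b a g M -> L = M.
Proof.
intros Hab E HL HM.
apply Rminus_diag_uniq. destruct (Req_dec (L - M) 0) as [Z|Z]; auto. exfalso.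
assert (He : 0 < Rabs (L - M) / 2) by (apply Rdiv_lt_0_compat; [apply Rabs_pos_lt; auto| lra]).
apply filterlim_locally with (eps := mkposreal _ He) in HL.
destruct HL as [d1 H1]. destruct (HM _ He) as [d2 [Hd2 H2]].
set (d := Rmin (Rmin d1 d2) (b - a)).
assert (Hd : 0 < d) by (unfold d; repeat apply Rmin_pos; try lra; apply cond_pos).
assert (Hd' : d <= d1 /\ d <= d2 /\ d <= b - a) by (unfold d; repeat split;
  [eapply Rle_trans; [apply Rmin_l| apply Rmin_l] | eapply Rle_trans; [apply Rmin_l| apply Rmin_r] | apply Rmin_r]).
set (y := a + d / 2).
assert (Hy1 : ball a d1 y) by (apply ball_sym; unfold ball; simpl; unfold AbsRing_ball, abs, minus, plus, opp; simpl;
  unfold y; rewrite Rabs_left; lra).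
specialize (H1 y Hy1 ltac:(unfold y; lra)). simpl in H1.
unfold ball in H1; simpl in H1; unfold AbsRing_ball, abs, minus, plus, opp in H1; simpl in H1.
assert (Hy2 : Rabs (y - a) < d2) by (unfold y; rewrite Rabs_right; lra).
specialize (H2 y ltac:(unfold y; lra) ltac:(unfold y; lra) Hy2).
rewrite E in H1 by (unfold y; lra).
assert (Rabs (L - M) <= Rabs (g y + - L) + Rabs (g y - M)).
{ replace (L - M) with (- (g y + - L) + (g y - M)) by ring.
  eapply Rle_trans; [apply Rabs_triang|]. rewrite Rabs_Ropp; lra. }
lra.
Qed.

Lemma Dw_uniq a b f f1 f2 x : a < b -> a <= x <= b -> Dw a b f f1 -> Dw a b f f2 -> f1 x = f2 x.
Proof. intros Hab Hx H1 H2. apply (LW_unique a b x _ _ _ Hab Hx (H1 x Hx) (H2 x Hx)). Qed.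

Lemma Rpower_pos x y : 0 < Rpower x y.
Proof. unfold Rpower; apply exp_pos. Qed.

Lemma construct_u a b r G : a < b -> (1 <= r)%nat -> dseq a b G -> (forall j, (j <= r)%nat -> G j a = 0) ->
  (forall y, a <= y <= b -> 0 < G (S r) y) ->
  exists DU, dseq a b DU /\ (forall x, a <= x <= b -> DU 0%nat x ^ S r = G 0%nat x) /\
   (forall x, a <= x <= b -> G 1%nat x = INR (S r) * DU 0%nat x ^ r * DU 1%nat x) /\
   (forall x, a < x <= b -> 0 < DU 0%nat x) /\ DU 0%nat a = 0 /\ (forall x, a <= x <= b -> 0 < DU 1%nat x).
Proof.
intros Hab Hr HG Ha Hp.
destruct (had_iter a b G r Hab HG Ha (S r) (le_n _)) as [DH [HD [E Hc]]].
destruct (Hc 0%nat) as [c [Hc0 Ec]]. rewrite Nat.add_0_r in Ec.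
set (h := DH 0%nat).
assert (Hch := sign_chain a b G r Hab HG Ha Hp).
assert (hpos : forall x, a <= x <= b -> 0 < h x).
{ intros x Hx. destruct (Req_dec x a) as [Ea|Ea].
  - subst x. unfold h; rewrite Ec. apply Rmult_lt_0_compat; [exact Hc0| apply Hp; lra].
  - assert (G0 : 0 < G 0%nat x) by (replace 0%nat with (S r - S r)%nat by lia; apply Hch; [lia| lra]).
    rewrite E in G0 by auto. assert (P := pow_lt (x - a) (S r) ltac:(lra)).
    fold h in G0. destruct (Rle_lt_dec (h x) 0); auto.
    assert ((x - a) ^ S r * h x <= 0) by (apply Rmult_le_0_l; lra). lra. }
assert (hs : smooth a b h) by (exists DH; split; auto).
set (be := / INR (S r)).
assert (HSr : 0 < INR (S r)) by (apply lt_0_INR; lia).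
set (w0 := fun x => Rpower (h x) be).
assert (w0s : smooth a b w0) by (apply smooth_Rpower; auto).
assert (us : smooth a b (fun x => (x - a) * w0 x)).
{ apply smooth_mult; auto. apply smooth_ext with (fun x => x + (-a)); [intros; ring|].
  apply smooth_plus; [apply smooth_id| apply smooth_const]. }
destruct us as [DU [HU0 HDU]].
assert (powE : forall x, a <= x <= b -> w0 x ^ S r = h x).
{ intros x Hx. unfold w0. rewrite <- Rpower_pow by apply Rpower_pos.
  rewrite Rpower_mult. unfold be. rewrite Rinv_l by lra. apply Rpower_1; auto. }
assert (E0 : forall x, a <= x <= b -> DU 0%nat x ^ S r = G 0%nat x).
{ intros x Hx. rewrite HU0 by auto. rewrite Rpow_mult_distr, powE, E by auto. reflexivity. }
assert (E1 : forall x, a <= x <= b -> G 1%nat x = INR (S r) * DU 0%nat x ^ r * DU 1%nat x).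
{ intros x Hx. apply (Dw_uniq a b (G 0%nat) (G 1%nat) (fun y => INR (S r) * DU 0%nat y ^ r * DU 1%nat y) x Hab Hx); [apply HG|].
  apply Dw_ext with (fun y => DU 0%nat y ^ S r) (fun y => INR (S r) * DU 0%nat y ^ pred (S r) * DU 1%nat y).
  - intros; apply E0; auto.
  - intros; reflexivity.
  - apply Dw_pow. apply HDU. }
destruct (smooth_shift a b w0 w0s) as [w0' [Dw0 _]].
assert (Du : Dw a b (DU 0%nat) (fun x => 1 * w0 x + (x - a) * w0' x)).
{ apply Dw_ext with (fun x => (x - a) * w0 x) (fun x => (1 - 0) * w0 x + (x - a) * w0' x).
  - intros; symmetry; auto.
  - intros; ring.
  - apply Dw_mult; auto. apply Dw_minus; [apply Dw_id| apply Dw_const]. }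
exists DU. split; [|split; [|split; [|split; [|split]]]]; auto.
- intros x Hx. rewrite HU0 by lra. apply Rmult_lt_0_compat; [lra| apply Rpower_pos].
- rewrite HU0 by lra. ring.
- intros x Hx. destruct (Req_dec x a) as [Ea|Ea].
  + subst x. rewrite (Dw_uniq a b (DU 0%nat) (DU 1%nat) _ a Hab ltac:(lra) (HDU 0%nat) Du).
    replace (a - a) with 0 by ring. rewrite Rmult_0_l, Rplus_0_r, Rmult_1_l. apply Rpower_pos.
  + assert (G1 : 0 < G 1%nat x) by (replace 1%nat with (S r - r)%nat by lia; apply Hch; [lia| lra]).
    rewrite E1 in G1 by auto.
    assert (P : 0 < DU 0%nat x ^ r).
    { apply pow_lt. rewrite HU0 by lra. apply Rmult_lt_0_compat; [lra| apply Rpower_pos]. }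
    destruct (Rle_lt_dec (DU 1%nat x) 0); auto.
    assert (INR (S r) * DU 0%nat x ^ r * DU 1%nat x <= 0).
    { apply Rmult_le_0_l; [| auto]. apply Rlt_le, Rmult_lt_0_compat; auto. }
    lra.
Qed.

Lemma near_point a b x0 d : a < b -> a <= x0 <= b -> 0 < d ->
  exists x, a <= x <= b /\ x <> x0 /\ Rabs (x - x0) < d.
Proof.
intros Hab Hx Hd. set (t := Rmin d (b - a) / 2).
assert (Ht : 0 < t /\ t < d /\ t <= (b - a)/2).
{ unfold t. assert (0 < Rmin d (b - a)) by (apply Rmin_pos; lra).
  assert (Rmin d (b - a) <= d) by apply Rmin_l. assert (Rmin d (b - a) <= b - a) by apply Rmin_r. lra. }
destruct (Rle_dec (x0 + t) b).
- exists (x0 + t). split; [lra| split; [lra|]]. rewrite Rabs_right; lra.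
- exists (x0 - t). split; [lra| split; [lra|]]. rewrite Rabs_left; lra.
Qed.

Lemma zero_order a b : a < b -> forall m D x0, dseq a b D -> a <= x0 <= b ->
  (forall j, (j <= m)%nat -> D j x0 = 0) ->
  forall eps, 0 < eps -> exists d, 0 < d /\ forall x, a <= x <= b -> Rabs (x - x0) < d ->
  Rabs (D 0%nat x) <= eps * Rabs (x - x0) ^ m.
Proof.
intros Hab m. induction m as [|m IH]; intros D x0 HD Hx0 HZ eps Heps.
- destruct (Dw_cont a b (D 0%nat) (D 1%nat) x0 (HD 0%nat) Hx0 eps Heps) as [d [Hd H]].
  exists d; split; auto. intros x Hx Hxd. simpl. rewrite Rmult_1_r.
  destruct (Req_dec x x0) as [E|E].
  + subst. rewrite HZ by lia. rewrite Rabs_R0; lra.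
  + specialize (H x Hx E Hxd). rewrite HZ in H by lia. rewrite Rminus_0_r in H. lra.
- destruct (IH (fun j => D (S j)) x0 ltac:(intros j; apply HD) Hx0 ltac:(intros j Hj; apply HZ; lia) eps Heps)
    as [d [Hd H]].
  exists d; split; auto. intros x Hx Hxd. simpl in H.
  destruct (Rtotal_order x x0) as [Hlt|[Heq|Hgt]].
  + destruct (MVT_Dw a b (D 0%nat) (D 1%nat) x x0 (HD 0%nat) ltac:(lra) Hlt ltac:(lra)) as [c [Hc E]].
    rewrite HZ in E by lia.
    assert (Hcd : Rabs (c - x0) <= Rabs (x - x0)) by (rewrite !Rabs_left by lra; lra).
    specialize (H c ltac:(lra) ltac:(lra)).
    replace (D 0%nat x) with (- (D 1%nat c * (x0 - x))) by lra.
    rewrite Rabs_Ropp, Rabs_mult. rewrite (Rabs_minus_sym x0 x). simpl.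
    apply Rle_trans with (eps * Rabs (c - x0) ^ m * Rabs (x - x0)).
    * apply Rmult_le_compat_r; [apply Rabs_pos| auto].
    * assert (Rabs (c - x0) ^ m <= Rabs (x - x0) ^ m) by (apply pow_incr; split; [apply Rabs_pos| auto]).
      assert (0 <= Rabs (x - x0)) by apply Rabs_pos.
      assert (0 <= Rabs (c - x0) ^ m) by (apply pow_le; apply Rabs_pos).
      assert (Rabs (c - x0) ^ m * Rabs (x - x0) <= Rabs (x - x0) ^ m * Rabs (x - x0)) by (apply Rmult_le_compat_r; auto).
      rewrite Rmult_assoc, (Rmult_comm (Rabs (x - x0)) (Rabs (x - x0) ^ m)). apply Rmult_le_compat_l; lra.
  + subst. rewrite HZ by lia. rewrite Rabs_R0. apply Rmult_le_pos; [lra| apply pow_le, Rabs_pos].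
  + destruct (MVT_Dw a b (D 0%nat) (D 1%nat) x0 x (HD 0%nat) ltac:(lra) Hgt ltac:(lra)) as [c [Hc E]].
    rewrite HZ in E by lia.
    assert (Hcd : Rabs (c - x0) <= Rabs (x - x0)) by (rewrite !Rabs_right by lra; lra).
    specialize (H c ltac:(lra) ltac:(lra)).
    replace (D 0%nat x) with (D 1%nat c * (x - x0)) by lra.
    rewrite Rabs_mult. simpl.
    apply Rle_trans with (eps * Rabs (c - x0) ^ m * Rabs (x - x0)).
    * apply Rmult_le_compat_r; [apply Rabs_pos| auto].
    * assert (Rabs (c - x0) ^ m <= Rabs (x - x0) ^ m) by (apply pow_incr; split; [apply Rabs_pos| auto]).
      assert (0 <= Rabs (x - x0)) by apply Rabs_pos.
      assert (0 <= Rabs (c - x0) ^ m) by (apply pow_le; apply Rabs_pos).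
      assert (Rabs (c - x0) ^ m * Rabs (x - x0) <= Rabs (x - x0) ^ m * Rabs (x - x0)) by (apply Rmult_le_compat_r; auto).
      rewrite Rmult_assoc, (Rmult_comm (Rabs (x - x0)) (Rabs (x - x0) ^ m)). apply Rmult_le_compat_l; lra.
Qed.

Lemma order_bound a b D V u u1 x0 s m : a < b -> a <= x0 <= b -> dseq a b D ->
  (forall j, (j < m)%nat -> D j x0 = 0) ->
  LimW a b x0 V (V x0) -> V x0 <> 0 ->
  LimW a b x0 (fun x => (u x - u x0) / (x - x0)) u1 -> u1 <> 0 ->
  (forall x, a <= x <= b -> D 0%nat x = V x * (u x - u x0) ^ s) -> (m <= s)%nat.
Proof.
intros Hab Hx0 HD HZ HV HV0 Hu Hu1 E.
destruct (Compare_dec.le_lt_dec m s) as [|Hlt]; auto. exfalso.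
set (kap := Rabs (V x0) / 2 * (Rabs u1 / 2) ^ s).
assert (Hkap : 0 < kap).
{ unfold kap. apply Rmult_lt_0_compat.
  - apply Rdiv_lt_0_compat; [apply Rabs_pos_lt; auto| lra].
  - apply pow_lt. apply Rdiv_lt_0_compat; [apply Rabs_pos_lt; auto| lra]. }
destruct (HV (Rabs (V x0) / 2)) as [d1 [Hd1 H1]]; [apply Rdiv_lt_0_compat; [apply Rabs_pos_lt; auto| lra]|].
destruct (Hu (Rabs u1 / 2)) as [d2 [Hd2 H2]]; [apply Rdiv_lt_0_compat; [apply Rabs_pos_lt; auto| lra]|].
destruct (zero_order a b Hab s D x0 HD Hx0 ltac:(intros j Hj; apply HZ; lia) (kap / 2) ltac:(lra))
  as [d3 [Hd3 H3]].
destruct (near_point a b x0 (Rmin d1 (Rmin d2 d3)) Hab Hx0 ltac:(repeat apply Rmin_pos; auto))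
  as [x [Hx [Hxx0 Hxd]]].
assert (Hx1 : Rabs (x - x0) < d1) by (eapply Rlt_le_trans; [apply Hxd| apply Rmin_l]).
assert (Hx23 : Rabs (x - x0) < Rmin d2 d3) by (eapply Rlt_le_trans; [apply Hxd| apply Rmin_r]).
assert (Hx2 : Rabs (x - x0) < d2) by (eapply Rlt_le_trans; [apply Hx23| apply Rmin_l]).
assert (Hx3 : Rabs (x - x0) < d3) by (eapply Rlt_le_trans; [apply Hx23| apply Rmin_r]).
specialize (H1 x Hx Hxx0 Hx1). specialize (H2 x Hx Hxx0 Hx2). specialize (H3 x Hx Hx3).
assert (AV : Rabs (V x0) / 2 <= Rabs (V x)).
{ assert (Rabs (V x0) <= Rabs (V x) + Rabs (V x - V x0)).
  { replace (V x0) with (V x - (V x - V x0)) at 1 by ring.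
    eapply Rle_trans; [apply Rabs_triang|]. rewrite Rabs_Ropp; lra. }
  lra. }
assert (Hxp : 0 < Rabs (x - x0)) by (apply Rabs_pos_lt; lra).
assert (AU : Rabs u1 / 2 * Rabs (x - x0) <= Rabs (u x - u x0)).
{ set (q := (u x - u x0) / (x - x0)) in *.
  assert (Eq : u x - u x0 = q * (x - x0)) by (unfold q; field; lra).
  rewrite Eq, Rabs_mult. apply Rmult_le_compat_r; [lra|].
  assert (Rabs u1 <= Rabs q + Rabs (q - u1)).
  { replace u1 with (q - (q - u1)) at 1 by ring.
    eapply Rle_trans; [apply Rabs_triang|]. rewrite Rabs_Ropp; lra. }
  lra. }
rewrite E in H3 by auto. rewrite Rabs_mult, <- RPow_abs in H3.
assert (P1 : (Rabs u1 / 2 * Rabs (x - x0)) ^ s <= Rabs (u x - u x0) ^ s).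
{ apply pow_incr; split; auto. apply Rmult_le_pos; [apply Rmult_le_pos; [apply Rabs_pos| lra]| apply Rabs_pos]. }
rewrite Rpow_mult_distr in P1.
assert (Px : 0 < Rabs (x - x0) ^ s) by (apply pow_lt; auto).
assert (Pu : 0 <= (Rabs u1 / 2) ^ s) by (apply pow_le; apply Rmult_le_pos; [apply Rabs_pos| lra]).
assert (kap * Rabs (x - x0) ^ s <= Rabs (V x) * Rabs (u x - u x0) ^ s).
{ unfold kap. rewrite Rmult_assoc. apply Rmult_le_compat; auto.
  - apply Rmult_le_pos; [apply Rabs_pos| lra].
  - apply Rmult_le_pos; auto. apply Rlt_le; auto. }
nra.
Qed.

Lemma LimW_comp_cont a b x0 (F u : R -> R) : LimW a b x0 u (u x0) -> continuity_pt F (u x0) ->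
  LimW a b x0 (fun x => F (u x)) (F (u x0)).
Proof.
intros Hu HF e He. destruct (HF e He) as [d1 [Hd1 H1]].
destruct (Hu d1 Hd1) as [d2 [Hd2 H2]]. exists d2; split; auto.
intros y Hy Hyx Hyd. destruct (Req_dec (u y) (u x0)) as [E|E].
- rewrite E, Rminus_eq_0, Rabs_R0; auto.
- apply (H1 (u y)). split; [split; [exact I| auto]| simpl; unfold R_dist; apply H2; auto].
Qed.

Definition polyf (n : nat) (c : nat -> R) (y : R) := lsum n (fun k => c k * y ^ k).

Definition AlgI := forall n (c : nat -> R), (exists k, (k < n)%nat /\ c k <> 0) ->
  exists mu : R -> nat,
  (forall y0, exists Q : R -> R, (forall y, continuity_pt Q y) /\ Q y0 <> 0 /\
      forall y, polyf n c y = Q y * (y - y0) ^ mu y0) /\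
  (forall l : list R, NoDup l -> (list_sum (map mu l) <= n - 1)%nat).

Lemma lsum_ext n F G : (forall k, (k < n)%nat -> F k = G k) -> lsum n F = lsum n G.
Proof. induction n; intros H; simpl; auto. rewrite IHn, H; auto. Qed.

Lemma lsum_mult_l n A F : lsum n (fun k => A * F k) = A * lsum n F.
Proof. induction n; simpl; [ring|]. rewrite IHn; ring. Qed.

Lemma lsum_zero n : lsum n (fun _ => 0) = 0.
Proof. induction n; simpl; auto. rewrite IHn; ring. Qed.

Lemma Dw_lsum a b n (c : nat -> R) (f f' : nat -> R -> R) : (forall k, Dw a b (f k) (f' k)) ->
  Dw a b (fun x => lsum n (fun k => c k * f k x)) (fun x => lsum n (fun k => c k * f' k x)).
Proof.
intros H. induction n as [|n IH]; simpl.
- apply Dw_const.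
- apply Dw_plus; auto. apply Dw_scal; auto.
Qed.

Lemma list_sum_le {A} (l : list A) f g : (forall p, In p l -> (f p <= g p)%nat) ->
  (list_sum (map f l) <= list_sum (map g l))%nat.
Proof.
induction l as [|p l IH]; intros H; simpl; auto.
assert (f p <= g p)%nat by (apply H; left; auto).
assert (list_sum (map f l) <= list_sum (map g l))%nat by (apply IH; intros; apply H; right; auto).
lia.
Qed.

Lemma NoDup_map_inj {A B} (f : A -> B) (P : A -> Prop) (l : list A) :
  (forall x y, P x -> P y -> f x = f y -> x = y) -> (forall x, In x l -> P x) -> NoDup l -> NoDup (map f l).
Proof.
intros Hinj HP Hl. induction Hl as [|x l Hx Hl IH]; simpl; constructor.
- intros Hin. apply in_map_iff in Hin. destruct Hin as [y [Ey Hy]].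
  assert (y = x) by (apply Hinj; auto; [apply HP; right; auto| apply HP; left; auto]).
  subst; auto.
- apply IH. intros; apply HP; right; auto.
Qed.

Lemma strict_incr a b f f' : Dw a b f f' -> (forall x, a <= x <= b -> 0 < f' x) ->
  forall x y, a <= x <= b -> a <= y <= b -> f x = f y -> x = y.
Proof.
intros Hf Hp x y Hx Hy E.
destruct (Rtotal_order x y) as [Hlt|[Heq|Hgt]]; auto; exfalso.
- destruct (MVT_Dw a b f f' x y Hf ltac:(lra) Hlt ltac:(lra)) as [c [Hc Ec]].
  assert (0 < f' c) by (apply Hp; lra). nra.
- destruct (MVT_Dw a b f f' y x Hf ltac:(lra) Hgt ltac:(lra)) as [c [Hc Ec]].
  assert (0 < f' c) by (apply Hp; lra). nra.
Qed.

Lemma core (HA : AlgI) a b r n g G phi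
  (Hab : a < b) (Hr : (1 <= r)%nat) (Hn : (1 <= n)%nat)
  (HG0 : forall x, a <= x <= b -> G 0%nat x = g x)
  (HG : dseq a b G)
  (Hga : forall j, (j <= r)%nat -> G j a = 0)
  (Hpos : forall y, a <= y <= b -> 0 < G (S r) y)
  (Hphi : forall k x, a < x <= b ->
        phi k x = G 1%nat x * Rpower (g x) ((INR k - INR r) / (INR r + 1)))
  (Hphia : forall k, filterlim (phi k) (at_right a) (locally (phi k a))) :
  exists D : nat -> nat -> R -> R,
    (forall k, (k < n)%nat ->
       (forall x, a <= x <= b -> D k 0%nat x = phi k x) /\ dseq a b (D k)) /\
    (forall c : nat -> R,
       (forall x, a <= x <= b -> lsum n (fun k => c k * phi k x) = 0) ->
       forall k, (k < n)%nat -> c k = 0) /\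
    (forall c : nat -> R,
       (exists x, a <= x <= b /\ lsum n (fun k => c k * phi k x) <> 0) ->
       forall l : list (R * nat),
         NoDup (map fst l) ->
         (forall p, In p l ->
            a <= fst p <= b /\
            forall j, (j < snd p)%nat -> lsum n (fun k => c k * D k j (fst p)) = 0) ->
         (list_sum (map snd l) <= n - 1)%nat).
Proof.
destruct (construct_u a b r G Hab Hr HG Hga Hpos) as [DU [HDU [E0 [E1 [Upos [Ua U1pos]]]]]].
set (psi := fun k x => INR (S r) * DU 1%nat x * DU 0%nat x ^ k).
assert (DU0s : smooth a b (DU 0%nat)) by (exists DU; split; auto).
assert (DU1s : smooth a b (DU 1%nat)) by (exists (fun j => DU (S j)); split; auto; intros j; apply HDU).
assert (psis : forall k, smooth a b (psi k)).
{ intros k; unfold psi. apply smooth_mult; [apply smooth_scal| apply smooth_pow]; auto. }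
assert (psic : forall k x, a <= x <= b -> LimW a b x (psi k) (psi k x)).
{ intros k x Hx. destruct (psis k) as [Dk [H0 HDk]].
  assert (C := Dw_cont a b (Dk 0%nat) (Dk 1%nat) x (HDk 0%nat) Hx).
  rewrite H0 in C by auto. eapply LW_ext; [| apply C]. intros; auto. }
assert (HSr : 0 < INR (S r)) by (apply lt_0_INR; lia).
assert (phieq' : forall k x, a < x <= b -> phi k x = psi k x).
{ intros k x Hx. rewrite Hphi by auto. rewrite <- HG0 by lra. rewrite <- E0 by lra.
  rewrite E1 by lra. unfold psi.
  set (U := DU 0%nat x). set (U1 := DU 1%nat x).
  assert (HU : 0 < U) by (apply Upos; auto).
  assert (A : Rpower (U ^ S r) ((INR k - INR r) / (INR r + 1)) = Rpower U (INR k - INR r)).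
  { rewrite <- Rpower_pow by lra. rewrite Rpower_mult. f_equal. rewrite S_INR. field.
    assert (0 <= INR r) by apply pos_INR. lra. }
  assert (B : U ^ r * Rpower U (INR k - INR r) = U ^ k).
  { rewrite <- !Rpower_pow by lra. rewrite <- Rpower_plus. f_equal. ring. }
  rewrite A. transitivity (INR (S r) * U1 * (U ^ r * Rpower U (INR k - INR r))); [ring|].
  rewrite B; reflexivity. }
assert (phieq : forall k x, a <= x <= b -> phi k x = psi k x).
{ intros k x Hx. destruct (Req_dec x a) as [Ea|Ea].
  - subst x. apply (eq_from_lims a b (phi k) (psi k)); [lra| intros y Hy; apply phieq'; auto| apply Hphia| apply psic; lra].
  - apply phieq'; lra. }
set (D := fun k => proj1_sig (constructive_indefinite_description _ (psis k))).
assert (HDk : forall k, (forall x, a <= x <= b -> D k 0%nat x = psi k x) /\ dseq a b (D k)).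
{ intros k. unfold D. destruct (constructive_indefinite_description _ (psis k)) as [Dk HH]. exact HH. }
assert (KEY : forall c : nat -> R, (exists k, (k < n)%nat /\ c k <> 0) -> exists mu : R -> nat,
   (forall x0, a <= x0 <= b -> forall m, (forall j, (j < m)%nat -> lsum n (fun k => c k * D k j x0) = 0) ->
      (m <= mu (DU 0%nat x0))%nat) /\
   (forall l : list R, NoDup l -> (list_sum (map mu l) <= n - 1)%nat)).
{ intros c Hne. destruct (HA n c Hne) as [mu [Hmu Hcount]]. exists mu; split; auto.
  intros x0 Hx0 m HZ. destruct (Hmu (DU 0%nat x0)) as [Q [Qc [Q0 QE]]].
  set (Dv := fun j x => lsum n (fun k => c k * D k j x)).
  assert (HDv : dseq a b Dv) by (intros j; apply Dw_lsum; intros k; apply (proj2 (HDk k))).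
  apply (order_bound a b Dv (fun x => INR (S r) * DU 1%nat x * Q (DU 0%nat x)) (DU 0%nat) (DU 1%nat x0)
      x0 (mu (DU 0%nat x0)) m Hab Hx0 HDv HZ).
  - apply LW_mult; [apply LW_scal|].
    + apply (Dw_cont a b (DU 1%nat) (DU 2%nat)); auto.
    + apply LimW_comp_cont; auto. apply (Dw_cont a b (DU 0%nat) (DU 1%nat)); auto.
  - assert (0 < DU 1%nat x0) by (apply U1pos; auto).
    apply Rmult_integral_contrapositive_currified; auto.
    apply Rmult_integral_contrapositive_currified; lra.
  - apply HDU; auto.
  - assert (0 < DU 1%nat x0) by (apply U1pos; auto). lra.
  - intros x Hx. unfold Dv.
    rewrite (lsum_ext n _ (fun k => INR (S r) * DU 1%nat x * (c k * DU 0%nat x ^ k))).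
    + rewrite lsum_mult_l. fold (polyf n c (DU 0%nat x)). rewrite QE. ring.
    + intros k _. rewrite (proj1 (HDk k)) by auto. unfold psi; ring. }
assert (vphi : forall c x, a <= x <= b -> lsum n (fun k => c k * phi k x) = lsum n (fun k => c k * D k 0%nat x)).
{ intros c x Hx. apply lsum_ext. intros k _. rewrite (proj1 (HDk k)), phieq; auto. }
exists D. split; [|split].
- intros k Hk. split; [intros x Hx; rewrite (proj1 (HDk k)), phieq; auto| apply (proj2 (HDk k))].
- intros c Hv k Hk. destruct (Req_dec (c k) 0) as [|Hck]; auto. exfalso.
  destruct (KEY c (ex_intro _ k (conj Hk Hck))) as [mu [Hm Hcnt]].
  set (Dv := fun j x => lsum n (fun k => c k * D k j x)).
  assert (HDv : dseq a b Dv) by (intros j; apply Dw_lsum; intros k'; apply (proj2 (HDk k'))).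
  assert (Z : forall j x, a <= x <= b -> Dv j x = 0).
  { intros j; induction j as [|j IH]; intros x Hx.
    - unfold Dv. rewrite <- vphi; auto.
    - apply (Dw_uniq a b (Dv j) (Dv (S j)) (fun _ => 0) x Hab Hx (HDv j)).
      apply Dw_ext with (fun _ => 0) (fun _ => 0); [intros; symmetry; auto| intros; auto| apply Dw_const]. }
  assert (H1 := Hm a ltac:(lra) n (fun j _ => Z j a ltac:(lra))).
  assert (H2 := Hcnt (DU 0%nat a :: nil) ltac:(constructor; [intros []| constructor])).
  simpl in H2. lia.
- intros c [x [Hx Hvx]] l Hl Hzeros.
  assert (Hne : exists k, (k < n)%nat /\ c k <> 0).
  { apply Classical_Prop.NNPP. intros Hno. apply Hvx.
    rewrite (lsum_ext n _ (fun _ => 0)); [apply lsum_zero|].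
    intros k Hk. destruct (Req_dec (c k) 0) as [E|E].
    - rewrite E; ring.
    - exfalso; apply Hno; exists k; auto. }
  destruct (KEY c Hne) as [mu [Hm Hcnt]].
  apply Nat.le_trans with (list_sum (map mu (map (DU 0%nat) (map fst l)))).
  + rewrite !map_map. apply list_sum_le. intros p Hp. destruct (Hzeros p Hp) as [Hpi Hz].
    apply Hm; auto.
  + apply Hcnt. apply NoDup_map_inj with (P := fun x => a <= x <= b); auto.
    * apply (strict_incr a b (DU 0%nat) (DU 1%nat)); auto.
    * intros y Hy. apply in_map_iff in Hy. destruct Hy as [p [Ep Hp]]. subst y.
      apply (Hzeros p Hp).
Qed.

Module AlgPart.
Import ssreflect ssrfun ssrbool eqtype ssrnat seq fintype bigop ssralg poly polydiv Rstruct.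
Import GRing.Theory.
Local Open Scope ring_scope.

Lemma horner_cont (p : {poly R}) y : continuity_pt (fun x => p.[x]) y.
Proof.
elim/poly_ind: p y => [|p c IH] y.
- apply: (continuity_pt_ext (fun _ => 0%R)); first by move=> x; rewrite horner0.
  exact: continuity_pt_const.
- apply: (continuity_pt_ext (fun x => Rplus (Rmult p.[x] x) c)).
    by move=> x; rewrite hornerMXaddC.
  apply: continuity_pt_plus; last exact: continuity_pt_const.
  apply: (continuity_pt_mult (fun x => p.[x]) (fun x => x)); first exact: IH.
  exact: derivable_continuous_pt (derivable_pt_id y).
Qed.


Lemma lsum_big n (F : nat -> R) : lsum n F = \sum_(i < n) F i.
Proof.
elim: n => [|n IH]; first by rewrite big_ord0.
by rewrite big_ord_recr /= IH.
Qed.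

Lemma polyf_horner n c y : polyf n c y = (\poly_(i < n) c i).[y].
Proof.
rewrite horner_poly /polyf lsum_big. apply: eq_bigr => i _. by rewrite RpowE.
Qed.

Lemma count_mup (l : seq R) (P : {poly R}) : P != 0 -> uniq l ->
  (sumn (map (fun y => mup y P) l) < size P)%N.
Proof.
elim: l P => [|y l IH] P HP /=; first by rewrite size_poly_gt0.
move=> /andP [Hy Hl].
have [m [q Hq EP]] := multiplicity_XsubC P y.
rewrite HP /= in Hq.
have qN0 : q != 0 by apply: contraNneq HP => q0; rewrite EP q0 mul0r.
have Xm0 : ('X - y%:P) ^+ m != 0 by rewrite expf_neq0 // polyXsubC_eq0.
have -> : mup y P = m by rewrite EP mupMr // mup_XsubCX eqxx.
have -> : map (fun z => mup z P) l = map (fun z => mup z q) l.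
  apply/eq_in_map => z Hz. rewrite EP mupM // mup_XsubCX.
  have -> : (y == z) = false by apply/eqP => E; rewrite E Hz in Hy.
  by rewrite addn0.
have Hs : size P = (size q + m)%N.
  rewrite EP size_Mmonic // ?monic_exp ?monicXsubC // size_exp_XsubC.
  by rewrite addnS.
rewrite Hs [(m + _)%N]addnC ltn_add2r. exact: IH.
Qed.

Lemma In_mem (l : seq R) x : List.In x l <-> x \in l.
Proof.
elim: l => [|y l IH] /=; first by split.
rewrite in_cons; split.
- case=> [->|H]; first by rewrite eqxx.
  by apply/orP; right; apply/IH.
- case/orP => [/eqP ->|H]; first by left.
  by right; apply/IH.
Qed.

Lemma NoDup_uniq (l : seq R) : List.NoDup l -> uniq l.
Proof.
move=> H; elim: H => [|x l0 Hx Hl IH] //=. rewrite IH andbT. apply/negP => H. by apply/Hx/In_mem.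
Qed.

Lemma list_sum_sumn (A : Type) (f : A -> nat) (l : seq A) : list_sum (List.map f l) = sumn (map f l).
Proof. by elim: l => //= x l ->. Qed.

Lemma algI : AlgI.
Proof.
move=> n c [k [Hk Hck]].
set P := \poly_(i < n) c i.
have HP : P != 0.
  apply/eqP => E. apply: Hck. have := coef_poly n c k. rewrite -/P E coef0.
  have -> : (k < n)%N by apply/ssrnat.ltP.
  by move=> <-.
exists (fun y => mup y P). split.
- move=> y0. have [m [q Hq EP]] := multiplicity_XsubC P y0.
  rewrite HP /= in Hq.
  have qN0 : q != 0 by apply: contraNneq HP => q0; rewrite EP q0 mul0r.
  have Em : mup y0 P = m by rewrite EP mupMr // mup_XsubCX eqxx.
  exists (fun y => q.[y]). split; first exact: horner_cont.
  split; first by move=> E; move: Hq; rewrite /root E eqxx.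
  move=> y. rewrite polyf_horner -/P Em {1}EP hornerM horner_exp hornerXsubC RpowE //.
- move=> l Hl. rewrite list_sum_sumn.
  have H1 := count_mup l P HP (NoDup_uniq l Hl).
  have H2 : (size P <= n)%N by apply: size_poly.
  move/ssrnat.ltP: H1 => H1. move/ssrnat.leP: H2 => H2. apply Nat.lt_succ_r. replace (S (n - 1)%coq_nat) with n by lia. exact (Nat.lt_le_trans _ _ _ H1 H2).
Qed.

End AlgPart.

Lemma dseq_of a b D : deriv_seq_on a b D -> dseq a b D.
Proof. intros H j; apply hdo_Dw; apply H. Qed.

Lemma of_dseq a b D : dseq a b D -> deriv_seq_on a b D.
Proof. intros H j; apply hdo_Dw; apply H. Qed.

Lemma sign_split a b F : a < b -> (forall x, a <= x <= b -> LimW a b x F (F x)) ->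
  (forall x, a <= x <= b -> F x <> 0) ->
  (forall y, a <= y <= b -> 0 < F y) \/ (forall y, a <= y <= b -> F y < 0).
Proof.
intros Hab Hc Hnz.
destruct (Classical_Prop.classic (forall y, a <= y <= b -> 0 < F y)) as [H|H]; [left; auto|right].
intros y Hy. destruct (Rtotal_order (F y) 0) as [|[E|Hgt]]; auto.
- exfalso; apply (Hnz y Hy E).
- exfalso. apply H. intros z Hz. destruct (Rtotal_order (F z) 0) as [Hlt|[E|Hgt']]; auto.
  + exfalso. set (Fc := fun t => F (clamp a b t)).
    assert (HFc : continuity Fc) by (intros t; apply cont_clamp; [lra| auto]).
    destruct (IVT_gen Fc z y 0 HFc) as [x [Hx Ex]].
    { unfold Fc; rewrite !clamp_id by auto. unfold Rmin, Rmax; destruct Rle_dec; lra. }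
    assert (Hxi : a <= x <= b) by (unfold Rmin, Rmax in Hx; destruct Rle_dec; lra).
    unfold Fc in Ex; rewrite clamp_id in Ex by auto. apply (Hnz x Hxi Ex).
  + exfalso; apply (Hnz z Hz E).
Qed.

Lemma lsum_opp n (c : nat -> R) F : lsum n (fun k => c k * - F k) = - lsum n (fun k => c k * F k).
Proof. induction n; simpl; [ring|]. rewrite IHn; ring. Qed.

Theorem lemma3p6
  (a b : R) (r n : nat) (g : R -> R) (G : nat -> R -> R)
  (phi : nat -> R -> R)
  (Hab : a < b) (Hr : (1 <= r)%nat) (Hn : (1 <= n)%nat)
  (* g is C^infinity on [a,b], with successive derivatives G j *)
  (HG0 : forall x, a <= x <= b -> G 0%nat x = g x)
  (HG : deriv_seq_on a b G)
  (* g(a) = 0 and g^(j)(a) = 0 for j = 1..r *)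
  (Hga : forall j, (j <= r)%nat -> G j a = 0)
  (* g^(r+1) does not vanish on [a,b] *)
  (Hgr : forall x, a <= x <= b -> G (S r) x <> 0)
  (* definition of phi_k on (a,b] in the two sign cases *)
  (Hphi : forall k x, a < x <= b ->
     ((forall y, a <= y <= b -> 0 < G (S r) y) ->
        phi k x = G 1%nat x * Rpower (g x) ((INR k - INR r) / (INR r + 1))) /\
     ((forall y, a <= y <= b -> G (S r) y < 0) ->
        phi k x = G 1%nat x * Rpower (- g x) ((INR k - INR r) / (INR r + 1))))
  (* value at a by continuous extension *)
  (Hphia : forall k, filterlim (phi k) (at_right a) (locally (phi k a))) :
  exists D : nat -> nat -> R -> R,
    (* each phi_k (k < n) is C^infinity on [a,b], with derivatives D k j *)
    (forall k, (k < n)%nat ->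
       (forall x, a <= x <= b -> D k 0%nat x = phi k x) /\ deriv_seq_on a b (D k)) /\
    (* the space spanned by phi_0..phi_{n-1} is n-dimensional *)
    (forall c : nat -> R,
       (forall x, a <= x <= b -> lsum n (fun k => c k * phi k x) = 0) ->
       forall k, (k < n)%nat -> c k = 0) /\
    (* every nonzero element has at most n-1 zeros in [a,b], counted with multiplicity *)
    (forall c : nat -> R,
       (exists x, a <= x <= b /\ lsum n (fun k => c k * phi k x) <> 0) ->
       forall l : list (R * nat),
         NoDup (map fst l) ->
         (forall p, In p l ->
            a <= fst p <= b /\
            forall j, (j < snd p)%nat -> lsum n (fun k => c k * D k j (fst p)) = 0) ->
         (list_sum (map snd l) <= n - 1)%nat).
Proof.
assert (HGd := dseq_of a b G HG).
destruct (sign_split a b (G (S r)) Hab (fun x Hx => Dw_cont a b _ _ x (HGd (S r)) Hx) Hgr) as [Hp|Hm].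
- destruct (core AlgPart.algI a b r n g G phi Hab Hr Hn HG0 HGd Hga Hp
    (fun k x Hx => proj1 (Hphi k x Hx) Hp) Hphia) as [D [H1 [H2 H3]]].
  exists D. split; [|split; auto].
  intros k Hk. destruct (H1 k Hk) as [A B]. split; auto. apply of_dseq; auto.
- set (G' := fun j x => - G j x). set (g' := fun x => - g x). set (phi' := fun k x => - phi k x).
  assert (HG'd : dseq a b G') by (intros j; apply Dw_opp; apply HGd).
  destruct (core AlgPart.algI a b r n g' G' phi' Hab Hr Hn) as [D [H1 [H2 H3]]].
  + intros x Hx; unfold G', g'; rewrite HG0; auto.
  + auto.
  + intros j Hj; unfold G'; rewrite Hga; auto; ring.
  + intros y Hy; unfold G'; specialize (Hm y Hy); lra.
  + intros k x Hx. unfold phi', G', g'. rewrite (proj2 (Hphi k x Hx) Hm). ring.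
  + intros k. unfold phi'. apply filterlim_locally. intros eps.
    specialize (Hphia k). apply filterlim_locally with (eps := eps) in Hphia.
    destruct Hphia as [d Hd]. exists d. intros y Hy Hy'. specialize (Hd y Hy Hy').
    unfold ball in *; simpl in *; unfold AbsRing_ball, abs, minus, plus, opp in *; simpl in *.
    replace (- phi k y + - - phi k a) with (- (phi k y + - phi k a)) by ring.
    rewrite Rabs_Ropp; auto.
  + exists (fun k j x => - D k j x). split; [|split].
    * intros k Hk. destruct (H1 k Hk) as [A B]. split.
      -- intros x Hx. rewrite A by auto. unfold phi'; ring.
      -- apply of_dseq. intros j; apply Dw_opp; apply B.
    * intros c Hc. apply H2. intros x Hx. unfold phi'. rewrite lsum_opp, Hc; auto; ring.
    * intros c [x [Hx Hv]] l Hl Hz. apply (H3 c); auto.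
      -- exists x; split; auto. unfold phi'. rewrite lsum_opp. intros E; apply Hv. lra.
      -- intros p Hp. destruct (Hz p Hp) as [A B]. split; auto.
         intros j Hj. specialize (B j Hj). rewrite lsum_opp in B. lra.
Qed.
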